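(* Let $L\ge 3$, $W=(\mathbb{Z}/2\mathbb{Z})^{*L}$, $q\in[\frac{1}{L-1},1]$, $l\ge 2$, $\beta\in\mathbb{C}_q^1[W]\ominus S_1$ and $\gamma\in\mathbb{C}_q^l[W]\ominus S_l$. Then for every $m,n\in\mathbb{N}_0$ there exist real constants $b^{m,n}_{k,j},c^{m,n}_{k,j}$ ($0\le k\le m$, $0\le j\le n$) such that $$h_m\beta h_n=\sum_{k\le m,\,j\le n}b^{m,n}_{k,j}\beta_{k,j},\qquad h_m\gamma h_n=\sum_{k\le m,\,j\le n}c^{m,n}_{k,j}\gamma_{k,j},$$ and such that for $m,n\in\mathbb{N}$, $0\le k\le m$, $0\le j\le n$, $$c^{m,n}_{k,j}=b^{m,n}_{k,j}+b^{m,n}_{k+1,j+1},$$ with the convention $b^{m,n}_{m+1,n+1}=0$ (and more generally $b^{m,n}_{k,j}=0$ when $k>m$ or $j>n$).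
   Context: $W=(\mathbb{Z}/2\mathbb{Z})^{*L}$ is the free product of $L$ copies of $\mathbb{Z}/2\mathbb{Z}$ with canonical generating set $S$ and word length $|\cdot|$. Put $p=\frac{q-1}{q^2}$. $\mathbb{C}_q[W]$ is the $*$-algebra with linear basis $\{T_w\}_{w\in W}$, $T_e=1$, $T_w^*=T_{w^{-1}}$, and $T_sT_w=T_{sw}$ if $|sw|>|w|$, $T_sT_w=T_{sw}+pT_w$ if $|sw|<|w|$ ($s\in S,w\in W$). Elements of $\mathbb{C}_q[W]$ are identified with vectors in $\ell^2(W)$ via $T_w\mapsto\delta_w$. $h_0=1$, $h_m=\sum_{|w|=m}T_w$. For $l\in\mathbb{N}_0$, $q_l$ is the projection onto $\mathrm{span}\{T_w:|w|=l\}$ and $\mathbb{C}_q^l[W]=q_l(\mathbb{C}_q[W])$. $S_l=\mathrm{span}\{q_l(h_1x),q_l(xh_1): x\in\mathbb{C}_q^{l-1}[W]\}$ and $\mathbb{C}_q^l[W]\ominus S_l$ is the orthogonal complement of $S_l$ in $\mathbb{C}_q^l[W]$ in $\ell^2(W)$. For $\gamma\in\mathbb{C}_q^l[W]$ and $m,n\in\mathbb{N}_0$, $\gamma_{m,n}=q_{m+n+l}(h_m\gamma h_n)$. *)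

(* Defs.v *)
From HB Require Import structures.
From mathcomp Require Import all_boot all_order all_algebra.
From mathcomp Require Import reals.
From mathcomp Require Import complex.
Set Implicit Arguments. Unset Strict Implicit. Unset Printing Implicit Defensive.
Import Order.TTheory GRing.Theory Num.Theory.
Local Open Scope ring_scope.
Local Open Scope complex_scope.

(* W = (Z/2Z)^{*L}: elements are reduced words over the generators 'I_L,
   i.e. sequences with no two consecutive equal letters; |w| = size w.
   Vectors of l^2(W) (in particular elements of C_q[W], via T_w |-> delta_w)
   are coefficient functions  word L -> R[i]  (value 0 on non-reduced words). *)
Section Hecke.
Variables (R : realType) (L : nat) (q : R).

Definition word := seq 'I_L.
Definition reduced (w : word) : bool := sorted (fun a b : 'I_L => a != b) w.
Definition vec := word -> R[i].

Definition pq : R[i] := ((q - 1) / q ^+ 2)%:C.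

Definition startsw (s : 'I_L) (w : word) : bool :=
  if w is a :: _ then a == s else false.
Definition smulw (s : 'I_L) (w : word) : word :=
  if w is a :: w' then (if a == s then w' else s :: w) else [:: s].
Definition endsw (s : 'I_L) (w : word) : bool := startsw s (rev w).
Definition wmuls (w : word) (s : 'I_L) : word := rev (smulw s (rev w)).

(* left multiplication by T_s, from T_s T_v = T_{sv} (|sv|>|v|),
   T_s T_v = T_{sv} + p T_v (|sv|<|v|) *)
Definition lmulS (s : 'I_L) (x : vec) : vec := fun w =>
  if reduced w then x (smulw s w) + (if startsw s w then pq * x w else 0)
  else 0.
(* right multiplication by T_s (image of the rule above under the
   star-involution): T_v T_s = T_{vs} (|vs|>|v|), T_{vs} + p T_v (|vs|<|v|) *)
Definition rmulS (x : vec) (s : 'I_L) : vec := fun w =>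
  if reduced w then x (wmuls w s) + (if endsw s w then pq * x w else 0)
  else 0.

(* T_u x  and  x T_v  for reduced u = s1...sk (T_u = T_{s1}...T_{sk}) *)
Definition lmulW (u : word) (x : vec) : vec := foldr lmulS x u.
Definition rmulW (x : vec) (v : word) : vec := foldl rmulS x v.

(* h_m x, x h_n, h_m x h_n  (h_m = sum_{|w|=m} T_w) *)
Definition hL (m : nat) (x : vec) : vec := fun w =>
  \sum_(t : m.-tuple 'I_L | reduced t) lmulW t x w.
Definition hR (x : vec) (n : nat) : vec := fun w =>
  \sum_(t : n.-tuple 'I_L | reduced t) rmulW x t w.
Definition hxh (m : nat) (x : vec) (n : nat) : vec := hR (hL m x) n.

Definition proj (l : nat) (x : vec) : vec := fun w =>
  if size w == l then x w else 0.

Definition inCl (l : nat) (x : vec) : Prop :=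
  forall w, x w != 0 -> reduced w /\ size w = l.

(* membership in S_l = span{q_l(h_1 x), q_l(x h_1) : x in C_q^{l-1}[W]};
   both generating families are linear images of a subspace, so the span
   is their sum *)
Definition inSl (l : nat) (y : vec) : Prop :=
  exists x1 x2 : vec, inCl l.-1 x1 /\ inCl l.-1 x2 /\
    y = (fun w => proj l (hL 1 x1) w + proj l (hR x2 1) w).

(* l^2 inner product <x,y> = sum_w x(w) conj(y(w)) for x in C_q^l[W]
   (x vanishes off the words of length l, so the sum runs over those) *)
Definition inner_l (l : nat) (x y : vec) : R[i] :=
  \sum_(t : l.-tuple 'I_L) x t * Num.conj (y t).

Definition inComplS (l : nat) (x : vec) : Prop :=
  inCl l x /\ forall y, inSl l y -> inner_l l x y = 0.

Definition gmn (l : nat) (g : vec) (m n : nat) : vec :=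
  proj (m + n + l) (hxh m g n).

End Hecke.

(* Main.v *)
Require Import Defs.
From HB Require Import structures.
From mathcomp Require Import all_boot all_order all_algebra.
From mathcomp Require Import reals.
From mathcomp Require Import complex.
From mathcomp Require Import ring lra zify.
From Stdlib Require Import FunctionalExtensionality.
Import Order.TTheory GRing.Theory Num.Theory.
Local Open Scope ring_scope.
Local Open Scope complex_scope.
Set Implicit Arguments. Unset Strict Implicit. Unset Printing Implicit Defensive.

Section S.
Variable R : realType.
Variable L : nat.
Variable q : R.
Local Notation vec := (vec R L).
Local Notation word := (word L).
Local Notation lS := (lmulS q).
Local Notation rS := (rmulS q).

Definition revv (y : vec) : vec := fun w => y (rev w).
Definition good (y : vec) := forall w, ~~ reduced w -> y w = 0.

Lemma revvK y : revv (revv y) = y.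
Proof. by apply: functional_extensionality => w; rewrite /revv revK. Qed.

Lemma reduced_rev (w : word) : reduced (rev w) = reduced w.
Proof.
rewrite /reduced rev_sorted; case: w => //= a w.
by apply: eq_path => x y /=; rewrite eq_sym.
Qed.

Lemma big_tuple_cons n (F : (n.+1).-tuple 'I_L -> R[i]) :
  \sum_(u : (n.+1).-tuple 'I_L) F u =
  \sum_(s : 'I_L) \sum_(t : n.-tuple 'I_L) F [tuple of s :: t].
Proof.
rewrite pair_big /=.
rewrite (reindex (fun p : 'I_L * n.-tuple 'I_L => [tuple of p.1 :: p.2])) //=.
exists (fun u => (thead u, [tuple of behead u])).
- move=> [s t] _ /=; rewrite theadE; congr pair; exact: val_inj.
- move=> u _; rewrite [in RHS](tuple_eta u); exact: val_inj.
Qed.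

Lemma big_tuple0 (F : 0.-tuple 'I_L -> R[i]) :
  \sum_(t : 0.-tuple 'I_L) F t = F [tuple].
Proof. by rewrite (big_pred1 [tuple]) // => t; rewrite /= (tuple0 t); apply/esym/eqP. Qed.

Lemma hL_sum m (y : vec) w : hL q m y w =
  \sum_(t : m.-tuple 'I_L) (if reduced t then lmulW q t y w else 0).
Proof. by rewrite /hL big_mkcond. Qed.

Lemma hL0 (y : vec) : hL q 0 y = y.
Proof. by apply: functional_extensionality => w; rewrite hL_sum big_tuple0. Qed.

Lemma hL1 (y : vec) w : hL q 1 y w = \sum_(s : 'I_L) lS s y w.
Proof. rewrite hL_sum big_tuple_cons; apply: eq_bigr => s _. by rewrite big_tuple0. Qed.

Lemma rS_rev (y : vec) s : rS y s = revv (lS s (revv y)).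
Proof.
apply: functional_extensionality => w; rewrite /rmulS /lmulS /revv reduced_rev revK //.
Qed.


Lemma rW_rev (y : vec) (t : word) : rmulW q y t = revv (lmulW q (rev t) (revv y)).
Proof.
elim: t y => [|a t IH] y /=; first by rewrite /rmulW /lmulW /= revvK.
rewrite /rmulW /= -/(rmulW q _ t) IH rS_rev revvK.
by rewrite /lmulW rev_cons foldr_rcons.
Qed.

Lemma hR_rev (y : vec) n : hR q y n = revv (hL q n (revv y)).
Proof.
apply: functional_extensionality => w; rewrite /hR /revv /hL.
under eq_bigr do rewrite rW_rev.
rewrite (reindex_inj (h := @rev_tuple n _)) /=; last first.
  by move=> t1 t2 /(congr1 val) /= /(congr1 rev); rewrite !revK => /val_inj.
apply: eq_big => t; first by rewrite reduced_rev.
by rewrite /revv revK.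
Qed.

Lemma lS_sum (I : Type) (r : seq I) (P : pred I) (F : I -> vec) s w :
  lS s (fun w => \sum_(i <- r | P i) F i w) w = \sum_(i <- r | P i) lS s (F i) w.
Proof.
rewrite /lmulS; case: ifP => _; last by rewrite big1.
rewrite big_split /=; congr (_ + _); case: startsw; first by rewrite mulr_sumr.
by rewrite big1.
Qed.

Lemma lS_scale (c : R[i]) (y : vec) s w : lS s (fun w => c * y w) w = c * lS s y w.
Proof.
rewrite /lmulS; case: ifP => _; last by rewrite mulr0.
case: startsw; ring.
Qed.

Lemma good_lS s (y : vec) : good (lS s y).
Proof. by move=> w /negbTE Hw; rewrite /lmulS Hw. Qed.

Lemma good_lW t (y : vec) : good y -> good (lmulW q t y).
Proof. by case: t => [|a t] //= _; apply: good_lS. Qed.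

Lemma lS_quad s (z : vec) w : good z -> lS s (lS s z) w = z w + pq q * lS s z w.
Proof.
move=> gz; rewrite {1}/lmulS; case: ifP => Hw; last by rewrite gz ?Hw // /lmulS Hw; ring.
case: w Hw => [|a w] Hw /=.
  rewrite /lmulS /= eqxx. ring.
case: eqP => [<-|/eqP ne].
  have Hw' : reduced w by move: Hw; rewrite /reduced /=; case: w => //= b w /andP[].
  have Hsm : smulw a w = a :: w /\ startsw a w = false.
    by case: w Hw {Hw'} => //= b w; rewrite /reduced /= eq_sym => /andP[/negbTE ->].
  rewrite /lmulS Hw Hw' /= eqxx Hsm.1 Hsm.2. ring.
have Hsw : reduced [:: s, a & w] by rewrite /reduced /= eq_sym ne.
rewrite /lmulS Hsw Hw /= eqxx (negbTE ne) /=.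
ring.
Qed.


Lemma reduced_cons2 (s a : 'I_L) (t : word) :
  reduced [:: s, a & t] = (s != a) && reduced (a :: t).
Proof. by []. Qed.

Lemma sum_if_eq (G : 'I_L -> R[i]) s :
  \sum_(a : 'I_L) (if a == s then G a else 0) = G s.
Proof. by rewrite -big_mkcond big_pred1_eq. Qed.

Lemma sum_if_neq (c : R[i]) b :
  \sum_(s : 'I_L) (if s != b then c else 0) = L.-1%:R * c.
Proof.
rewrite -big_mkcond sumr_const.
  have -> : #|[pred s : 'I_L | s != b]| = L.-1.
    by rewrite -[in RHS](card_ord L) -(cardC1 b); apply: eq_card => s; rewrite !inE.
by rewrite mulr_natl.
Qed.

Lemma hL_rec m (y : vec) w : good y ->
  hL q 1 (hL q m.+1 y) w = hL q m.+2 y w + pq q * hL q m.+1 y w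
     + (if m is 0 then L else L.-1)%:R * hL q m y w.
Proof.
move=> gy.
rewrite hL1.
have E1 : forall s, lS s (hL q m.+1 y) w = \sum_(a : 'I_L) \sum_(t : m.-tuple 'I_L)
    (if reduced (a :: t) then lS s (lS a (lmulW q t y)) w else 0).
  move=> s; rewrite /hL lS_sum big_mkcond big_tuple_cons.
  by apply: eq_bigr => a _; apply: eq_bigr => t _.
have E2 : forall s a (t : m.-tuple 'I_L),
   (if reduced (a :: t) then lS s (lS a (lmulW q t y)) w else 0) =
   (if reduced [:: s, a & t] then lmulW q [:: s, a & t] y w else 0) +
   (if a == s then (if reduced (a :: t) then lmulW q t y w + pq q * lmulW q (a :: t) y w else 0) else 0).
  move=> s a t; case: eqP => [->|/eqP ne].
    rewrite reduced_cons2 eqxx /= add0r; case: ifP => // _.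
    by rewrite lS_quad //; apply: good_lW.
  have ne' : (s != a) by rewrite eq_sym.
  by rewrite reduced_cons2 ne' /= addr0.
under eq_bigr do rewrite E1.
under eq_bigr do under eq_bigr do under eq_bigr do rewrite E2.
under eq_bigr do under eq_bigr do rewrite big_split.
under eq_bigr do rewrite big_split.
rewrite big_split /= -addrA; congr (_ + _).
  rewrite hL_sum big_tuple_cons; apply: eq_bigr => s _.
  by rewrite big_tuple_cons.
have E3 : forall s (a : 'I_L), \sum_(t : m.-tuple 'I_L)
   (if a == s then (if reduced (a :: t) then lmulW q t y w + pq q * lmulW q (a :: t) y w else 0) else 0)
   = if a == s then \sum_(t : m.-tuple 'I_L) (if reduced (a :: t) then lmulW q t y w else 0)
      + pq q * \sum_(t : m.-tuple 'I_L) (if reduced (a :: t) then lmulW q (a :: t) y w else 0) else 0.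
  move=> s a; case: eqP => _; last by rewrite big1.
  rewrite mulr_sumr -big_split /=; apply: eq_bigr => t _; case: ifP => _ //; ring.
under eq_bigr => s _ do rewrite (eq_bigr _ (fun a _ => E3 s a)) sum_if_eq.
rewrite big_split /= addrC; congr (_ + _).
  rewrite -mulr_sumr hL_sum big_tuple_cons; congr (_ * _); apply: eq_bigr => s _.
case: m E1 E2 E3 => [|m] _ _ _.
  under eq_bigr do rewrite big_tuple0 /=.
  by rewrite hL0 sumr_const card_ord mulr_natl.
under eq_bigr do rewrite big_tuple_cons.
rewrite hL_sum big_tuple_cons mulr_sumr exchange_big /=; apply: eq_bigr => b _.
rewrite mulr_sumr exchange_big /=; apply: eq_bigr => t _.
case: (path _ b t).
  under eq_bigr do rewrite andbT.
  by rewrite sum_if_neq.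
by rewrite big1 ?mulr0 // => s _; rewrite andbF.
Qed.


Definition pr : R := (q - 1) / q ^+ 2.
Lemma pqE : pq q = pr%:C. Proof. by []. Qed.

Definition E l (x : vec) (f : nat -> nat -> R) : vec := fun w =>
  if reduced w && (l <= size w)%N then
    \sum_(k < (size w - l).+1) (f k (size w - l - k)%N)%:C * x (drop k (take (k + l) w))
  else 0.

Definition Pl l (x : vec) := (forall w, x w != 0 -> reduced w /\ size w = l) /\
  (forall v, \sum_(s : 'I_L) x (s :: v) = 0).

Definition Aop (b : bool) (f : nat -> nat -> R) : nat -> nat -> R := fun k j =>
  (if k is k'.+1 then f k' j else 0) + pr * f k j + (L.-1)%:R * f k.+1 j
  - (if b && (k == 0)%N then f 0%N j.+1 else 0).

Lemma good_E l x f : good (E l x f).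
Proof. by move=> w /negbTE Hw; rewrite /E Hw. Qed.

Lemma Pl_nred l x w : Pl l x -> ~~ reduced w -> x w = 0.
Proof. by move=> [H _] Hw; apply/eqP; apply: contraNT Hw => /H []. Qed.

Lemma H1 l x (a : 'I_L) (w : word) : (1 <= l)%N -> Pl l x ->
  \sum_(s | s != a) x (take l [:: s, a & w]) = if l == 1%N then - x [:: a] else 0.
Proof.
case: l => // l _ Px.
have : \sum_(s : 'I_L) x (s :: take l (a :: w)) = 0 by apply: Px.2.
rewrite (bigD1 a) //= => /eqP; rewrite addrC addr_eq0 => /eqP ->.
case: l {Px} (Px) => [|l] Px /=; first by [].
by rewrite (Pl_nred Px) ?oppr0 // /reduced /= eqxx.
Qed.


Lemma E_cons l x f (s : 'I_L) (w : word) : reduced (s :: w) -> (l <= size w)%N ->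
  E l x f (s :: w) = (f 0%N (size w - l).+1)%:C * x (take l (s :: w)) +
    \sum_(k < (size w - l).+1) (f k.+1 (size w - l - k)%N)%:C * x (drop k (take (k + l) w)).
Proof.
move=> Hr Hl; rewrite /E Hr /= (leqW Hl) /= subSn // big_ord_recl /= subn0 add0n drop0.
congr (_ + _); apply: eq_bigr => k _ /=.
Qed.

Lemma E_small l x f (w : word) : (size w < l)%N -> E l x f w = 0.
Proof. by move=> H; rewrite /E leqNgt H andbF. Qed.

Lemma E_eq l x f (w : word) : reduced w -> size w = l ->
  E l x f w = (f 0%N 0%N)%:C * x w.
Proof.
move=> Hr Hs; rewrite /E Hr Hs leqnn /= subnn big_ord1 /= drop0 add0n.
by rewrite -Hs take_size.
Qed.


Lemma reduced_tail (a : 'I_L) (w : word) : reduced (a :: w) -> reduced w.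
Proof. by rewrite /reduced /=; case: w => //= b w /andP[]. Qed.

Lemma sum_neq_const (c : R[i]) (b : 'I_L) :
  \sum_(s | s != b) c = L.-1%:R * c.
Proof. by rewrite big_mkcond sum_if_neq. Qed.

Lemma sum4 n (A B C D : 'I_n -> R) (X : 'I_n -> R[i]) :
  \sum_(k < n) (A k + pr * B k + (L.-1)%:R * C k - D k)%:C * X k =
  \sum_(k < n) (A k)%:C * X k + pr%:C * \sum_(k < n) (B k)%:C * X k
  + (L.-1)%:R * \sum_(k < n) (C k)%:C * X k - \sum_(k < n) (D k)%:C * X k.
Proof.
rewrite !mulr_sumr -!big_split -sumrB; apply: eq_bigr => k _ /=.
rewrite !(rmorphD, rmorphN, rmorphM) rmorph_nat /=; ring.
Qed.

Lemma E_step l x f w : (1 <= l)%N -> Pl l x ->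
  hL q 1 (E l x f) w = E l x (Aop (l == 1%N) f) w.
Proof.
move=> l1 Px; rewrite hL1.
case Hr: (reduced w); last first.
  by rewrite /E Hr /= big1 // => s _; rewrite /lmulS Hr.
under eq_bigr => s _ do rewrite {1}/lmulS Hr.
rewrite big_split /=.
case: w Hr => [|a w] Hr.
  rewrite [X in _ + X]big1 // addr0 (@E_small _ _ _ [::]) //.
  case: (l =P 1%N) => [El | nl].
    under eq_bigr do rewrite E_eq ?El //.
    by rewrite -mulr_sumr Px.2 mulr0.
  by rewrite big1 // => s _; apply: E_small => /=; lia.
rewrite (bigD1 a) //= eqxx.
have -> : \sum_(s | s != a) E l x f (smulw s (a :: w)) = \sum_(s | s != a) E l x f [:: s, a & w].
  by apply: eq_bigr => s ne /=; rewrite eq_sym (negbTE ne).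
have -> : \sum_(s : 'I_L) (if a == s then pq q * E l x f (a :: w) else 0) = pq q * E l x f (a :: w).
  by rewrite (eq_bigr (fun s => if s == a then pq q * E l x f (a::w) else 0)) ?sum_if_eq // => s _; rewrite eq_sym.
have Hrw := reduced_tail Hr.
have Hrs : forall s, s != a -> reduced [:: s, a & w] by move=> s ne; rewrite reduced_cons2 Hr ne.
case Hl: (l <= size (a :: w))%N; last first.
  move: Hl => /negbT; rewrite -ltnNge /= => Hl.
  rewrite !E_small //; last by lia.
  rewrite mulr0 add0r addr0.
  case: (l =P (size w).+2) => [Heq | Hne]; last first.
    by rewrite big1 // => s _; apply: E_small => /=; lia.
  have Hs : forall s, s != a -> E l x f [:: s, a & w] = (f 0%N 0%N)%:C * x (take l [:: s, a & w]).
    by move=> s ne; rewrite E_eq ?Hrs // ?Heq // take_oversize // Heq.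
  by rewrite (eq_bigr _ Hs) -mulr_sumr H1 // Heq mulr0.
have Ew : E l x f w = \sum_(k < size (a :: w) - l)
    (f k (size (a :: w) - l - k.+1)%N)%:C * x (drop k.+1 (take (k.+1 + l) (a :: w))).
  case: (ltnP (size w) l) => Hl'.
    rewrite E_small //.
    have -> : (size (a :: w) - l = 0)%N by move: Hl; rewrite /=; lia.
    by rewrite big_ord0.
  rewrite /E Hrw Hl' /=.
  have -> : ((size w).+1 - l = (size w - l).+1)%N by rewrite subSn.
  by apply: eq_bigr => k _; rewrite subSS.
under eq_bigr => s ne do rewrite (@E_cons l x f s (a :: w) (Hrs s ne) Hl).
rewrite big_split /= -mulr_sumr H1 // sum_neq_const Ew.
rewrite /E Hr Hl /= /Aop sum4.
set d := ((size w).+1 - l)%N.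
rewrite [X in _ = X + _ + _ - _]big_ord_recl /= rmorph0 mul0r add0r.
rewrite [X in _ = _ - X]big_ord_recl [X in _ = _ - (_ + X)]big1 ?addr0; last first.
  by move=> k _; rewrite /= /bump /= add1n andbF rmorph0 mul0r.
rewrite [X in _ = X + _ + _ - _](eq_bigr (fun k : 'I_d => (f k (d - k.+1)%N)%:C * x (drop k (take (k + l) w)))); last first.
  by move=> k _; rewrite /bump /= !add0n add1n.
rewrite pqE /= subn0 drop0 add0n.
case: eqP => [El|nl] /=.
  rewrite El /= take0; ring.
have -> : (0 : R)%:C = 0 by []. 
ring.
Qed.


Fixpoint G (b : bool) (f : nat -> nat -> R) (m : nat) : nat -> nat -> R :=
  match m with
  | 0 => f
  | 1 => Aop b f
  | (m'.+1 as m1).+1 => fun k j => Aop b (G b f m1) k j - pr * G b f m1 k j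
                         - (if m' is 0 then L else L.-1)%:R * G b f m' k j
  end.

Lemma E_lin l x (g h u : nat -> nat -> R) (c : nat) w :
  E l x (fun k j => g k j - pr * h k j - c%:R * u k j) w =
  E l x g w - pr%:C * E l x h w - c%:R * E l x u w.
Proof.
rewrite /E; case: ifP => _; last by ring.
rewrite !mulr_sumr -!sumrB; apply: eq_bigr => k _.
rewrite !(rmorphB, rmorphM) rmorph_nat; ring.
Qed.

Lemma hL_E l x f m : (1 <= l)%N -> Pl l x ->
  hL q m (E l x f) = E l x (G (l == 1%N) f m).
Proof.
move=> l1 Px.
suff : hL q m (E l x f) = E l x (G (l == 1%N) f m) /\
       hL q m.+1 (E l x f) = E l x (G (l == 1%N) f m.+1) by case.
elim: m => [|m [IH0 IH1]].
  split; first by rewrite hL0.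
  by apply: functional_extensionality => w; rewrite E_step.
split=> //; apply: functional_extensionality => w.
have := hL_rec m w (good_E l x f).
rewrite IH1 IH0 E_step // => H.
rewrite [G _ _ m.+2]/= E_lin H pqE; ring.
Qed.


Definition T (f : nat -> nat -> R) : nat -> nat -> R := fun k j => f j k.

Lemma seg_rev (w : word) d l k : size w = (d + l)%N -> (k <= d)%N ->
  drop k (take (k + l) (rev w)) = rev (drop (d - k) (take (d - k + l) w)).
Proof.
move=> Hs Hk.
rewrite take_rev Hs (_ : (d + l - (k + l) = d - k)%N); last by lia.
rewrite drop_rev size_drop Hs (_ : (d + l - (d - k) - k = l)%N); last by lia.
by rewrite take_drop addnC.
Qed.

Lemma revv_E l x f : revv (E l x f) = E l (revv x) (T f).
Proof.
apply: functional_extensionality => w; rewrite /revv /E reduced_rev size_rev.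
case: ifP => // /andP[_ Hl].
set d := (size w - l)%N.
rewrite (reindex_inj rev_ord_inj) /=; apply: eq_bigr => k _.
have Hk : (k <= d)%N by rewrite -ltnS.
rewrite subSS (@seg_rev w d l (d - k)) ?leq_subr //; last by rewrite /d subnK.
by rewrite subKn.
Qed.

Definition delta : nat -> nat -> R := fun k j => if (k == 0%N) && (j == 0%N) then 1 else 0.

Lemma x_E l x : Pl l x -> x = E l x delta.
Proof.
move=> Px; apply: functional_extensionality => w; rewrite /E.
case: ifP => [/andP[Hr Hl]|H]; last first.
  apply/eqP; apply: contraFT H => /(Px.1) [-> ->]; by rewrite leqnn.
rewrite big_ord_recl big1 ?addr0 => [|k _]; last by rewrite /delta /= rmorph0 mul0r.
rewrite /delta /= subn0 drop0 add0n.
case: eqP => [Hd|Hd].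
  rewrite rmorph1 mul1r take_oversize //; move: Hd Hl; lia.
rewrite rmorph0 mul0r; apply/eqP; apply: contraT => /(Px.1) [_ Hs].
by move: Hd; rewrite Hs subnn.
Qed.

Definition Bc b m n := T (G b (T (G b delta m)) n).

Lemma hxh_E l x m n : (1 <= l)%N -> Pl l x -> Pl l (revv x) ->
  hxh q m x n = E l x (Bc (l == 1%N) m n).
Proof.
move=> l1 Px Prx.
rewrite /hxh hR_rev {1}(x_E Px) hL_E // revv_E hL_E // revv_E revvK.
by [].
Qed.


Definition supp (f : nat -> nat -> R) M N := forall k j, (M < k)%N || (N < j)%N -> f k j = 0.

Lemma supp_Aop b f M N : supp f M N -> supp (Aop b f) M.+1 N.
Proof.
move=> Hf k j H; rewrite /Aop.
have A1 : (if k is k'.+1 then f k' j else 0) = 0.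
  by case: k H => // k H; apply: Hf; move: H; rewrite /=; lia.
have A2 : f k j = 0 by apply: Hf; move: H; lia.
have A3 : f k.+1 j = 0 by apply: Hf; move: H; lia.
have A4 : (if b && (k == 0)%N then f 0%N j.+1 else 0) = 0.
  by case: ifP => // /andP[_ /eqP Hk]; apply: Hf; move: H; rewrite Hk; lia.
rewrite A1 A2 A3 A4; ring.
Qed.


Lemma supp_mono f M N M' N' : supp f M N -> (M <= M')%N -> (N <= N')%N -> supp f M' N'.
Proof. by move=> H h1 h2 k j Hk; apply: H; move: Hk; lia. Qed.

Lemma lead_Aop b f M N j : supp f M N -> Aop b f M.+1 j = f M j.
Proof.
move=> Hf; rewrite /Aop /= (Hf M.+1 j) ?(Hf M.+2 j) ?ltnSn ?leqnn //=; last by lia.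
rewrite andbF; ring.
Qed.

Lemma supp_G b f M N m : supp f M N -> supp (G b f m) (M + m) N.
Proof.
move=> Hf.
suff : supp (G b f m) (M + m) N /\ supp (G b f m.+1) (M + m.+1) N by case.
elim: m => [|m [IH0 IH1]].
  by rewrite addn0 addn1; split => //; apply: supp_Aop.
split => // k j H.
have -> : G b f m.+2 k j = Aop b (G b f m.+1) k j - pr * G b f m.+1 k j
   - (if m is 0 then L else L.-1)%:R * G b f m k j by [].
have Z0 : G b f m k j = 0 by apply: IH0; move: H; lia.
have Z1 : G b f m.+1 k j = 0 by apply: IH1; move: H; lia.
have Z2 : Aop b (G b f m.+1) k j = 0 by apply: (supp_Aop b IH1); move: H; lia.
rewrite Z0 Z1 Z2; ring.
Qed.

Lemma lead_G b f M N m j : supp f M N -> G b f m (M + m) j = f M j.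
Proof.
move=> Hf.
suff : G b f m (M + m) j = f M j /\ G b f m.+1 (M + m.+1) j = f M j by case.
elim: m => [|m [IH0 IH1]].
  by rewrite addn0 addn1; split => //; apply: lead_Aop Hf.
split => //.
have -> : G b f m.+2 (M + m.+2) j = Aop b (G b f m.+1) (M + m.+2) j - pr * G b f m.+1 (M + m.+2) j
   - (if m is 0 then L else L.-1)%:R * G b f m (M + m.+2) j by [].
have S1 := @supp_G b f M N m.+1 Hf.
have S0 := @supp_G b f M N m Hf.
have Z0 : G b f m (M + m.+2) j = 0 by apply: S0; apply/orP; left; lia.
have Z1 : G b f m.+1 (M + m.+2) j = 0 by apply: S1; apply/orP; left; lia.
have Z2 : Aop b (G b f m.+1) (M + m.+2) j = f M j.
  by rewrite addnS (@lead_Aop b _ _ N j S1) IH1.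
rewrite Z0 Z1 Z2; ring.
Qed.

Lemma supp_Bc b m n : supp (Bc b m n) m n.
Proof.
have H1 : supp (G b delta m) m 0.
  rewrite -[m]add0n; apply: supp_G => k j H; rewrite /delta.
  by case: eqP => [Hk|//]; case: eqP => [Hj|]; rewrite ?andbF //; move: H; rewrite Hk Hj.
have H2 : supp (T (G b delta m)) 0 m by move=> k j H; rewrite /T H1 // orbC.
have H3 := @supp_G b _ _ _ n H2.
by move=> k j H; rewrite /Bc /T H3 // orbC add0n.
Qed.

Lemma lead_Bc b m n : Bc b m n m n = 1.
Proof.
have H1 : supp delta 0 0.
  move=> k j H; rewrite /delta.
  by case: eqP => [Hk|//]; case: eqP => [Hj|]; rewrite ?andbF //; move: H; rewrite Hk Hj.
have H2 : supp (T (G b delta m)) 0 m.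
  by move=> k j H; rewrite /T (@supp_G b _ _ _ m H1) // add0n orbC.
have := @lead_G b _ 0%N m n m H2; rewrite add0n /Bc /T => ->.
have := @lead_G b delta 0%N 0%N m 0%N H1; rewrite add0n /T => ->.
by rewrite /delta.
Qed.


Definition X l (x : vec) k j (w : word) : R[i] :=
  if reduced w && (size w == k + j + l)%N then x (drop k (take (k + l) w)) else 0.

Lemma E_top l x f K J w : supp f K J -> f K J = 1 -> size w = (K + J + l)%N ->
  E l x f w = if reduced w then x (drop K (take (K + l) w)) else 0.
Proof.
move=> Hf H1 Hs; rewrite /E Hs leq_addl andbT.
case: (reduced w) => //.
rewrite addnK.
have HK : (K < (K + J).+1)%N by lia.
rewrite (bigD1 (Ordinal HK)) //= big1 ?addr0.
  by rewrite addKn H1 rmorph1 mul1r.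
move=> k /= ne.
have ne' : (nat_of_ord k != K) by apply: contra ne => /eqP Hk; apply/eqP; apply: val_inj.
rewrite Hf ?rmorph0 ?mul0r //.
have := ltn_ord k; move: ne'; lia.
Qed.

Lemma gmn_X l x k j w : (1 <= l)%N -> Pl l x -> Pl l (revv x) ->
  gmn q l x k j w = X l x k j w.
Proof.
move=> l1 Px Prx; rewrite /gmn /proj (hxh_E _ _ l1 Px Prx) /X.
case: eqP => Hs.
  by rewrite (E_top _ (@supp_Bc _ k j) (@lead_Bc _ k j) Hs) andbT.
by rewrite andbF.
Qed.


Lemma sum_match n k d (F : nat -> R[i]) : (forall j, (n < j)%N -> F j = 0) ->
  \sum_(j < n.+1) (if (k + j == d)%N then F j else 0) = if (k <= d)%N then F (d - k)%N else 0.
Proof.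
move=> HF; case: leqP => Hkd; last first.
  by rewrite big1 // => j _; case: eqP => // Hj; move: Hkd; lia.
case: (ltnP n (d - k)) => Hn.
  rewrite HF // big1 // => j _; case: eqP => // Hj.
  have := ltn_ord j; move: Hn Hj; lia.
have Hj0 : (d - k < n.+1)%N by lia.
rewrite (bigD1 (Ordinal Hj0)) //= big1 ?addr0.
  by rewrite subnKC // eqxx.
move=> j ne; case: eqP => // Hj.
case/eqP: ne; apply: val_inj => /=; lia.
Qed.

Lemma E_box l x f m n w : supp f m n ->
  E l x f w = \sum_(k < m.+1) \sum_(j < n.+1) (f k j)%:C * X l x k j w.
Proof.
move=> Hf; rewrite /E /X.
case Hr: (reduced w) => /=; last first.
  by rewrite big1 // => k _; rewrite big1 // => j _; rewrite mulr0.
case: (leqP l (size w)) => Hl; last first.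
  rewrite big1 // => k _; rewrite big1 // => j _.
  have -> : (size w == k + j + l)%N = false by apply/eqP; lia.
  by rewrite mulr0.
set d := (size w - l)%N.
have inner : forall k : nat, \sum_(j < n.+1) (f k j)%:C *
    (if (size w == k + j + l)%N then x (drop k (take (k + l) w)) else 0) =
    if (k <= d)%N then (f k (d - k)%N)%:C * x (drop k (take (k + l) w)) else 0.
  move=> k; rewrite -(@sum_match n k d (fun j => (f k j)%:C * x (drop k (take (k + l) w)))).
    apply: eq_bigr => j _.
    have -> : (size w == k + j + l)%N = (k + j == d)%N by rewrite /d; apply/eqP/eqP; lia.
    by case: ifP => _; rewrite ?mulr0.
  by move=> j Hj; rewrite Hf ?rmorph0 ?mul0r // Hj orbT.
under [RHS]eq_bigr => k _ do rewrite inner.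
rewrite (big_ord_widen (m.+1 + d.+1) (fun k => (f k (d - k)%N)%:C * x (drop k (take (k + l) w)))) ?leq_addl //.
rewrite (big_ord_widen (m.+1 + d.+1) (fun k => if (k <= d)%N then (f k (d - k)%N)%:C * x (drop k (take (k + l) w)) else 0)) ?leq_addr //.
rewrite [LHS]big_mkcond [RHS]big_mkcond; apply: eq_bigr => k _ /=.
rewrite ltnS; case: (leqP k d) => Hkd; last by case: ifP.
case: (ltnP m k) => Hmk; last by rewrite ltnS Hmk.
by rewrite Hf ?Hmk // rmorph0 mul0r; case: ifP.
Qed.


Definition Psi (f : nat -> nat -> R) : nat -> nat -> R := fun k j => f k j + f k.+1 j.+1.

Lemma Psi_Aop f : Psi (Aop true f) = Aop false (Psi f).
Proof.
apply: functional_extensionality => k; apply: functional_extensionality => j.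
rewrite /Psi /Aop; case: k => [|k] /=; ring.
Qed.

Lemma Psi_G f m : Psi (G true f m) = G false (Psi f) m.
Proof.
suff : Psi (G true f m) = G false (Psi f) m /\ Psi (G true f m.+1) = G false (Psi f) m.+1 by case.
elim: m => [|m [IH0 IH1]]; first by split => //; rewrite /= Psi_Aop.
split => //.
have -> : G false (Psi f) m.+2 = fun k j => Aop false (G false (Psi f) m.+1) k j
   - pr * G false (Psi f) m.+1 k j - (if m is 0 then L else L.-1)%:R * G false (Psi f) m k j by [].
rewrite -IH1 -IH0 -Psi_Aop.
apply: functional_extensionality => k; apply: functional_extensionality => j.
rewrite /Psi /=; ring.
Qed.

Lemma Psi_delta : Psi delta = delta.
Proof.
apply: functional_extensionality => k; apply: functional_extensionality => j.
by rewrite /Psi /delta /= addr0.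
Qed.

Lemma Bc_Psi m n : Bc false m n = Psi (Bc true m n).
Proof.
rewrite /Bc.
have -> : G false delta m = Psi (G true delta m) by rewrite Psi_G Psi_delta.
have E2 : forall g, T (Psi g) = Psi (T g) by [].
by rewrite E2 -Psi_G E2.
Qed.


Definition dlt (v : word) : vec := fun w => (w == v)%:R.

Lemma hL1_0 : hL q 1 (fun _ : word => 0 : R[i]) = (fun _ => 0).
Proof.
apply: functional_extensionality => w; rewrite hL1 big1 // => s _.
by rewrite /lmulS; case: ifP => //; case: startsw; rewrite ?mulr0 addr0.
Qed.

Lemma hR1_0 : hR q (fun _ : word => 0 : R[i]) 1 = (fun _ => 0).
Proof.
rewrite hR_rev (_ : revv (fun _ => 0) = fun _ => 0) // hL1_0.
by apply: functional_extensionality.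
Qed.

Lemma inner_comp l x v : (1 <= l)%N -> inCl l x -> reduced v -> size v = l.-1 ->
  inner_l l x (fun w => proj l (hL q 1 (dlt v)) w + proj l (hR q (fun _ => 0) 1) w)
  = \sum_(s : 'I_L) x (s :: v).
Proof.
case: l => // l _ Cx Hv Hs; rewrite /inner_l big_tuple_cons; apply: eq_bigr => a _.
rewrite hR1_0.
have Y : forall t : l.-tuple 'I_L, x (a :: t) * Num.conj (proj l.+1 (hL q 1 (dlt v)) (a :: t) + proj l.+1 (fun _ => 0) (a :: t))
   = x (a :: t) * (t == v :> word)%:R.
  move=> t; case: (x (a :: t) =P 0) => [->|/eqP Hx]; first by rewrite !mul0r.
  have [Hr _] := Cx _ Hx.
  congr (_ * _).
  rewrite /proj /= size_tuple eqxx addr0 hL1.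
  have -> : \sum_(s : 'I_L) lS s (dlt v) (a :: t) = \sum_(s : 'I_L) (if s == a then (t == v :> word)%:R else 0).
    apply: eq_bigr => s _; rewrite /lmulS Hr /dlt /=.
    have Hn : ((a :: t) == v) = false by apply/eqP => Hav; move: Hs; rewrite -Hav /= size_tuple; lia.
    rewrite Hn mulr0 if_same addr0.
    case: (s =P a) => [->|ne]; first by rewrite eqxx.
    have ne' : (a == s) = false by apply/eqP => Eas; apply: ne; rewrite Eas.
    rewrite ne'.
    have -> : ([:: s, a & t] == v) = false by apply/eqP => Hav; move: Hs; rewrite -Hav /= size_tuple; lia.
    by [].
  rewrite sum_if_eq; case: (_ == _); by rewrite ?rmorph1 ?rmorph0.
rewrite (eq_bigr _ (fun t _ => Y t)).
have Htv : size v == l by rewrite Hs.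
rewrite (bigD1 (Tuple Htv)) //= eqxx mulr1 big1 ?addr0 // => t ne.
case: eqP => [Htv'|]; last by rewrite mulr0.
by case/eqP: ne; apply: val_inj.
Qed.


Lemma Pl_of l x : (1 <= l)%N -> inComplS q l x -> Pl l x.
Proof.
move=> l1 [Cx Ox]; split => // v.
case Hv: (reduced v && (size v == l.-1)%N).
  move/andP: Hv => [Hv /eqP Hs].
  rewrite -(inner_comp l1 Cx Hv Hs); apply: Ox.
  exists (dlt v), (fun _ => 0); split; last split => //.
    move=> w; rewrite /dlt; case: (w =P v) => [->|]; last by rewrite eqxx.
    by [].
  by move=> w; rewrite eqxx.
rewrite big1 // => s _; apply/eqP; apply: contraFT Hv => /Cx [Hr Hs].
by rewrite (reduced_tail Hr) -Hs /= eqxx.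
Qed.

Lemma dlt_rev v : revv (dlt (rev v)) = dlt v.
Proof.
apply: functional_extensionality => w; rewrite /revv /dlt.
by rewrite (can_eq revK).
Qed.

Lemma Pl_rev l x : (1 <= l)%N -> inComplS q l x -> Pl l (revv x).
Proof.
move=> l1 [Cx Ox].
have Crx : inCl l (revv x).
  by move=> w /Cx [Hr Hs]; rewrite -reduced_rev -(size_rev w).
split => // v.
case Hv: (reduced v && (size v == l.-1)%N); last first.
  rewrite big1 // => s _; apply/eqP; apply: contraFT Hv => /Crx [Hr Hs].
  by rewrite (reduced_tail Hr) -Hs /= eqxx.
move/andP: Hv => [Hv /eqP Hs].
rewrite -(inner_comp l1 Crx Hv Hs).
set y := fun w => proj l (hL q 1 (fun _ => 0)) w + proj l (hR q (dlt (rev v)) 1) w.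
have Hy : inner_l l x y = 0.
  apply: Ox; exists (fun _ => 0), (dlt (rev v)); split; first by move=> w; rewrite eqxx.
  split; last by [].
  move=> w; rewrite /dlt; case: (w =P rev v) => [->|]; last by rewrite eqxx.
  by rewrite reduced_rev size_rev.
transitivity (inner_l l x y); last exact: Hy.
rewrite /inner_l (reindex_inj (h := @rev_tuple l _)) /=; last first.
  by move=> t1 t2 /(congr1 val) /= /(congr1 rev); rewrite !revK => /val_inj.
apply: eq_bigr => t _; rewrite /revv revK /y hL1_0 hR1_0 hR_rev dlt_rev /proj /revv size_rev.
by rewrite !if_same !addr0 add0r.
Qed.

End S.

Unset Implicit Arguments.

Theorem lemma3p5 (R : realType) (L : nat) (q : R) (l : nat)
    (beta gamma : vec R L) :
  (3 <= L)%N ->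
  ((L - 1)%:R)^-1 <= q <= 1 ->
  (2 <= l)%N ->
  inComplS q 1 beta ->
  inComplS q l gamma ->
  forall m n : nat, exists b c : nat -> nat -> R,
    hxh q m beta n =
      (fun w => \sum_(k < m.+1) \sum_(j < n.+1) (b k j)%:C * gmn q 1 beta k j w)
    /\ hxh q m gamma n =
      (fun w => \sum_(k < m.+1) \sum_(j < n.+1) (c k j)%:C * gmn q l gamma k j w)
    /\ ((1 <= m)%N -> (1 <= n)%N ->
        forall k j : nat, (k <= m)%N -> (j <= n)%N ->
          c k j = b k j + (if (k < m)%N && (j < n)%N then b k.+1 j.+1 else 0)).
Proof.
move=> _ _ Hl Hb Hg m n.
have l1 : (1 <= l)%N by lia.
have Pb := Pl_of (leqnn 1) Hb.
have Prb := Pl_rev (leqnn 1) Hb.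
have Pg := Pl_of l1 Hg.
have Prg := Pl_rev l1 Hg.
exists (Bc L q true m n), (Bc L q false m n).
split.
  rewrite (hxh_E q m n (leqnn 1) Pb Prb) /=.
  apply: functional_extensionality => w.
  rewrite (E_box _ _ w (supp_Bc L q true (m:=m) (n:=n))).
  apply: eq_bigr => k _; apply: eq_bigr => j _.
  by rewrite (gmn_X q k j w (leqnn 1) Pb Prb).
split.
  rewrite (hxh_E q m n l1 Pg Prg).
  have -> : (l == 1%N) = false by apply/eqP; lia.
  apply: functional_extensionality => w.
  rewrite (E_box _ _ w (supp_Bc L q false (m:=m) (n:=n))).
  apply: eq_bigr => k _; apply: eq_bigr => j _.
  by rewrite (gmn_X q k j w l1 Pg Prg).
move=> _ _ k j Hk Hj.
rewrite Bc_Psi /Psi; case: ifP => // H.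
have Z : Bc L q true m n k.+1 j.+1 = 0.
  apply: (supp_Bc L q true); move: H.
  by case: (ltnP k m) => Hkm; case: (ltnP j n) => Hjn //= _; apply/orP; [right|left|left]; lia.
by rewrite Z addr0.
Qed.
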